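(* For every $\epsilon\in[0,1]$ and every unweighted congestion game $\mathcal{G}$ with affine latency functions, $\epsilon\text{-PoS}(\mathcal{G})\le\frac{1+\sqrt{3}}{\epsilon+\sqrt{3}}$.
   Context: A weighted congestion game consists of a finite set $[n]=\{1,\dots,n\}$ of players, a finite set $E$ of resources, for each player $i$ a weight $w_i>0$ and a nonempty finite strategy set $\Sigma_i\subseteq 2^E$, and for each resource $e$ a latency function $\ell_e:\mathbb{R}_{\ge 0}\to\mathbb{R}_{\ge 0}$. It is unweighted if $w_i=1$ for all $i$. Affine latency functions means $\ell_e(x)=\alpha_e x+\beta_e$ with $\alpha_e,\beta_e\ge 0$. For a strategy profile $S=(s_1,\dots,s_n)\in\prod_i\Sigma_i$, the congestion of $e$ is $L_e(S)=\sum_{i:\,e\in s_i}w_i$, the cost of player $i$ is $c_i(S)=\sum_{e\in s_i}\ell_e(L_e(S))$, and the social cost is $\mathrm{SUM}(S)=\sum_{i\in[n]}c_i(S)$; $S^*$ denotes a profile minimizing $\mathrm{SUM}$. For $t\in\Sigma_i$, $(S_{-i}\diamond t)$ denotes the profile obtained from $S$ by replacing $s_i$ with $t$. For $\epsilon\ge 0$, $S$ is an $\epsilon$-approximate pure Nash equilibrium ($\epsilon$-PNE) if $c_i(S)\le(1+\epsilon)c_i(S_{-i}\diamond t)$ for all $i\in[n]$ and all $t\in\Sigma_i$. The $\epsilon$-approximate price of stability is $\epsilon\text{-PoS}(\mathcal{G})=\min_{S\ \epsilon\text{-PNE}}\mathrm{SUM}(S)/\mathrm{SUM}(S^* )$.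 *)

(* Defs.v *)
From HB Require Import structures.
From mathcomp Require Import all_boot all_order all_algebra.
Set Implicit Arguments. Unset Strict Implicit. Unset Printing Implicit Defensive.
Import Order.TTheory GRing.Theory Num.Theory.
Local Open Scope ring_scope.

Section CG.
Variables (R : realFieldType) (n : nat) (E : finType).
Definition profile := {ffun 'I_n -> {set E}}.

Definition congestion (S : profile) (e : E) : R :=
  (#|[set i : 'I_n | e \in S i]|)%:R.

Definition latency (alpha beta : E -> R) (e : E) (x : R) : R :=
  alpha e * x + beta e.

Definition cost (alpha beta : E -> R) (S : profile) (i : 'I_n) : R :=
  \sum_(e in S i) latency alpha beta e (congestion S e).

Definition social_cost (alpha beta : E -> R) (S : profile) : R :=
  \sum_(i < n) cost alpha beta S i.

Definition deviate (S : profile) (i : 'I_n) (t : {set E}) : profile :=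
  [ffun j => if j == i then t else S j].

Definition feasible (sigma : 'I_n -> {set {set E}}) (S : profile) : Prop :=
  forall i, S i \in sigma i.

Definition is_eps_PNE (sigma : 'I_n -> {set {set E}}) (alpha beta : E -> R)
    (eps : R) (S : profile) : Prop :=
  feasible sigma S /\
  forall (i : 'I_n) (t : {set E}), t \in sigma i ->
    cost alpha beta S i <= (1 + eps) * cost alpha beta (deviate S i t) i.
End CG.

(* Main.v *)
Require Import Defs.
From HB Require Import structures.
From mathcomp Require Import all_boot all_order all_algebra.
From mathcomp Require Import ring lra.
Import Order.TTheory GRing.Theory Num.Theory.
Set Implicit Arguments. Unset Strict Implicit.
Local Open Scope ring_scope.

Definition Hp (R : pzRingType) (s k o : R) : R :=
  (2 - s) * k ^+ 2 - 2 * k * o + (2 + s) * o ^+ 2 + s * k - (2 + s) * o.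
Definition psi (R : fieldType) (eps a b k : R) : R :=
  (1 + eps) / 2 * a * k ^+ 2 + (1 - eps) / 2 * a * k + b * k.
Definition gg (R : pzRingType) (eps a b k : R) : R := (1 + eps) * a * k - eps * a + b.

Lemma perA (R : rcfType) (eps a b c : R) (bs bt : bool) :
  0 <= eps -> 0 <= a -> 0 <= b -> 0 <= c ->
  (bs%:R) * (a * (bs%:R + c) + b) + (psi eps a b (bt%:R + c) - psi eps a b (bs%:R + c))
   <= (1 + eps) * ((bt%:R) * (a * (bt%:R + c) + b)).
Proof.
move=> e0 a0 b0 c0; rewrite /psi.
case: bs; case: bt => /=; rewrite ?mul1r ?mul0r ?add0r ?subrr ?addr0 ?mulr0.
- have L : 0 <= a * (1 + c) + b by rewrite addr_ge0 ?mulr_ge0 ?addr_ge0.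
  have := mulr_ge0 e0 L. lra.
- have : 0 <= eps * a * c by rewrite mulr_ge0 ?mulr_ge0.
  have h2 : (2 : R) != 0 by rewrite pnatr_eq0.
  set X := (_ + _ - _). have -> : X = - (eps * a * c) - (a * (1 + c) + b) by rewrite /X; field.
  lra.
- have : 0 <= eps * a by rewrite mulr_ge0.
  have : 0 <= eps * b by rewrite mulr_ge0.
  have h2 : (2 : R) != 0 by rewrite pnatr_eq0.
  set X := (_ - _). have -> : X = (1 + eps) * (a * (1 + c) + b) - eps * a - eps * b by rewrite /X; field.
  lra.
- lra.
Qed.

Lemma eqle (R : rcfType) (x y : R) : x = y -> x <= y. Proof. by move=> ->. Qed.

Lemma perB (R : rcfType) (eps a b c : R) (bs bt : bool) :
  0 <= eps -> 0 <= a ->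
  psi eps a b (bt%:R + c) - psi eps a b (bs%:R + c)
   <= (bt%:R) * gg eps a b (bs%:R + c + 1) - (bs%:R) * gg eps a b (bs%:R + c).
Proof.
move=> e0 a0; rewrite /psi /gg.
have h2 : (2 : R) != 0 by rewrite pnatr_eq0.
have : 0 <= eps * a by rewrite mulr_ge0.
case: bs; case: bt => /=; rewrite ?mul1r ?mul0r ?add0r ?subrr ?addr0 ?mulr0 ?subr0 ?sub0r.
- move=> h. have E : (1 + eps) * a * (1 + c + 1) - eps * a + b - ((1 + eps) * a * (1 + c) - eps * a + b) = a + eps * a by ring.
  rewrite E; lra.
- by move=> _; apply: eqle; field.
- by move=> _; apply: eqle; field.
- by rewrite oppr0.
Qed.

Lemma Hp_ge0 (R : rcfType) (s : R) (k o : nat) :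
  0 <= s -> s ^+ 2 = 3 -> 0 <= Hp s k%:R o%:R.
Proof.
move=> s0 s3.
have s107 : 10 / 7 <= s.
  have : (10/7) ^+ 2 <= s ^+ 2 by rewrite s3; lra.
  by rewrite ler_pXn2r // ?nnegrE //; lra.
have s2 : s <= 2.
  have : s ^+ 2 <= 2 ^+ 2 by rewrite s3; lra.
  by rewrite ler_pXn2r // ?nnegrE //; lra.
have oo : (o%:R : R) <= o%:R ^+ 2.
  case: o => [|o]; first by rewrite expr2 mulr0.
  rewrite expr2 ler_pMr ?ltr0Sn //. by rewrite ler1n.
have o0 : (0 : R) <= o%:R by [].
rewrite /Hp.
case: k => [|[|k]].
  nra.
- case: (posnP o) oo o0 => [->|o1] oo o0.
  + lra.
  + have o1' : (1 : R) <= o%:R by rewrite ler1n.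
    nra.
- have k2 : (2 : R) <= k.+2%:R by rewrite -[2]/(2%:R) ler_nat.
  set K := (k.+2)%:R in k2 *; set O := (o%:R : R) in oo o0 *.
  have E : 4 * (2 + s) * ((2 - s) * K ^+ 2 - 2 * K * O + (2 + s) * O ^+ 2 + s * K - (2 + s) * O)
     = (2 * (2 + s) * O - (2 * K + 2 + s)) ^+ 2 + (2 + s) * (4 * K * (s - 1) - (2 + s))
       + 4 * K ^+ 2 * (3 - s ^+ 2) by ring.
  rewrite s3 subrr mulr0 addr0 in E.
  have P1 : 0 <= (2 + s) * (4 * K * (s - 1) - (2 + s)) by apply: mulr_ge0; nra.
  have P2 : 0 <= 4 * (2 + s) * ((2 - s) * K ^+ 2 - 2 * K * O + (2 + s) * O ^+ 2 + s * K - (2 + s) * O).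
    by rewrite E; apply: addr_ge0 => //; apply: sqr_ge0.
  rewrite pmulr_rge0 in P2 => //. lra.
Qed.

Definition rhoC (R : fieldType) (s eps : R) := (1 + s) / (eps + s).
Definition muC (R : fieldType) (s eps : R) := (1 - eps) / ((1 + eps) * (eps + s)).
Definition nuC (R : fieldType) (s eps : R) := rhoC s eps - muC s eps.

Lemma perC (R : rcfType) (s eps a b : R) (k o : nat) :
  0 <= s -> s ^+ 2 = 3 -> 0 <= eps -> eps <= 1 -> 0 <= a -> 0 <= b ->
  k%:R * (a * k%:R + b) + muC s eps * (o%:R * gg eps a b (k%:R + 1) - k%:R * gg eps a b k%:R)
   + nuC s eps * (psi eps a b o%:R - psi eps a b k%:R)
  <= rhoC s eps * (o%:R * (a * o%:R + b)).
Proof.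
move=> s0 s3 e0 e1 a0 b0.
set D := eps + s. set rho := rhoC s eps. set mu := muC s eps. set nu := nuC s eps.
have s1 : 1 <= s.
  have : 1 ^+ 2 <= s ^+ 2 by rewrite s3; lra.
  by rewrite ler_pXn2r // ?nnegrE //; lra.
have D0 : 0 < D by rewrite /D; lra.
have E : rho * (o%:R * (a * o%:R + b)) -
  (k%:R * (a * k%:R + b) + mu * (o%:R * gg eps a b (k%:R + 1) - k%:R * gg eps a b k%:R)
   + nu * (psi eps a b o%:R - psi eps a b k%:R))
  = a * (1 - eps) * Hp s k%:R o%:R / (2 * D) + b * ((1 - eps) / D) * k%:R.
  rewrite /nu /mu /rho /nuC /muC /rhoC /D /psi /gg /Hp. field.
  apply/andP; split; [rewrite gt_eqF //|]. lra.
rewrite -subr_ge0 E.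
apply: addr_ge0.
  apply: divr_ge0; last lra.
  apply: mulr_ge0; [apply: mulr_ge0 => //; lra| exact: Hp_ge0].
apply: mulr_ge0 => //. apply: mulr_ge0 => //. apply: divr_ge0; lra.
Qed.
Definition cnt n (E : finType) (S : profile n E) (e : E) : nat := #|[set i : 'I_n | e \in S i]|.

Lemma sum_mem (R : pzSemiRingType) n (E : finType) (S : profile n E) e :
  \sum_(i < n) ((e \in S i)%:R : R) = (cnt S e)%:R.
Proof.
rewrite -natr_sum /cnt -sum1_card /=; congr (_%:R).
rewrite [RHS]big_mkcond; apply: eq_bigr => i _; rewrite inE; by case: (e \in S i).
Qed.

Lemma sum_cost (R : pzSemiRingType) n (E : finType) (S : profile n E) (f : E -> R) :
  \sum_(i < n) \sum_(e in S i) f e = \sum_e (cnt S e)%:R * f e.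
Proof.
under eq_bigr do rewrite big_mkcond.
rewrite exchange_big; apply: eq_bigr => e _ /=.
rewrite -sum_mem mulr_suml; apply: eq_bigr => i _.
by case: (e \in S i); rewrite ?mul1r ?mul0r.
Qed.

Lemma cnt_split n (E : finType) (S : profile n E) i e :
  cnt S e = ((e \in S i) + #|[set j | (j != i) && (e \in S j)]|)%N.
Proof.
rewrite /cnt (cardD1 i) inE; congr (_ + _)%N.
by apply: eq_card => j; rewrite !inE.
Qed.

Lemma cnt_dev n (E : finType) (S : profile n E) i t e :
  cnt (deviate S i t) e = ((e \in t) + #|[set j | (j != i) && (e \in S j)]|)%N.
Proof.
rewrite (cnt_split _ i) /deviate ffunE eqxx; congr (_ + _)%N.
apply: eq_card => j; rewrite !inE ffunE.
by case: (j =P i).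
Qed.

Lemma cost_eq (R : realFieldType) n (E : finType) (alpha beta : E -> R) (S : profile n E) i :
  cost alpha beta S i = \sum_e (e \in S i)%:R * (alpha e * (cnt S e)%:R + beta e).
Proof.
rewrite /cost big_mkcond; apply: eq_bigr => e _ /=.
by case: (e \in S i); rewrite ?mul1r ?mul0r.
Qed.

Lemma social_eq (R : realFieldType) n (E : finType) (alpha beta : E -> R) (S : profile n E) :
  social_cost alpha beta S = \sum_e (cnt S e)%:R * (alpha e * (cnt S e)%:R + beta e).
Proof. by rewrite /social_cost /cost sum_cost. Qed.

Lemma exists_min (R : realDomainType) (T : finType) (P : pred T) (F : T -> R) (x0 : T) :
  P x0 -> exists x, P x /\ forall y, P y -> F x <= F y.
Proof.
move=> Px0; case: (Order.TotalTheory.arg_minP F Px0) => x Px Hx.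
by exists x; split.
Qed.

Definition Psi (R : realFieldType) n (E : finType) eps (alpha beta : E -> R) (S : profile n E) : R :=
  \sum_e psi eps (alpha e) (beta e) (cnt S e)%:R.

Unset Implicit Arguments.
Theorem mainTheorem4 (R : rcfType) (n : nat) (E : finType)
    (sigma : 'I_n -> {set {set E}}) (alpha beta : E -> R)
    (hsigma : forall i, sigma i != set0)
    (halpha : forall e, 0 <= alpha e) (hbeta : forall e, 0 <= beta e)
    (eps : R) (heps0 : 0 <= eps) (heps1 : eps <= 1) :
  exists S : profile n E,
    is_eps_PNE sigma alpha beta eps S /\
    forall T : profile n E, feasible sigma T ->
      social_cost alpha beta S
        <= (1 + Num.sqrt 3) / (eps + Num.sqrt 3) * social_cost alpha beta T.
Proof.
set s := Num.sqrt 3.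
have s0 : 0 <= s by apply: sqrtr_ge0.
have sp : 0 < s by rewrite sqrtr_gt0.
have s3 : s ^+ 2 = 3 by rewrite sqr_sqrtr.
pose feasb (S : profile n E) := [forall i, S i \in sigma i].
have feasP S : feasible sigma S <-> feasb S.
  by split => [h|/forallP h]; [apply/forallP|].
pose S0 : profile n E := [ffun i => odflt set0 [pick x in sigma i]].
have fS0 : feasb S0.
  apply/forallP => i; rewrite ffunE; case: pickP => [x -> //|h].
  by have /set0Pn [x] := hsigma i; rewrite h.
have [S [fS minS]] := exists_min (Psi eps alpha beta) fS0.
have devF i t T : feasb T -> t \in sigma i -> feasb (deviate T i t).
  move=> /forallP fT ti; apply/forallP => j; rewrite ffunE.
  by case: (j =P i) => [->|].
have devi (T : profile n E) i t : deviate T i t i = t by rewrite ffunE eqxx.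
exists S; split.
  split; first by apply/feasP.
  move=> i t ti.
  have hP := minS _ (devF i t S fS ti).
  rewrite !cost_eq devi.
  apply: le_trans (_ : _ <= \sum_e ((e \in S i)%:R * (alpha e * (cnt S e)%:R + beta e)
      + (psi eps (alpha e) (beta e) (cnt (deviate S i t) e)%:R
         - psi eps (alpha e) (beta e) (cnt S e)%:R))) _.
    rewrite big_split /= sumrB.
    rewrite /Psi in hP. lra.
  rewrite mulr_sumr; apply: ler_sum => e _.
  rewrite (cnt_split S i e) (cnt_dev S i t e) !natrD.
  exact: perA.
move=> T /feasP fT.
have hP := minS _ fT.
pose k e : R := (cnt S e)%:R.
pose o e : R := (cnt T e)%:R.
have hN : 0 <= \sum_e (o e * gg eps (alpha e) (beta e) (k e + 1)
                       - k e * gg eps (alpha e) (beta e) (k e)).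
  have Xi i : 0 <= \sum_e ((e \in T i)%:R * gg eps (alpha e) (beta e) (k e + 1)
                       - (e \in S i)%:R * gg eps (alpha e) (beta e) (k e)).
    have fTi : T i \in sigma i by move/forallP: fT.
    have h := minS _ (devF i (T i) S fS fTi).
    rewrite -subr_ge0 /Psi -sumrB in h.
    apply: le_trans h _; apply: ler_sum => e _.
    rewrite /k (cnt_split S i e) (cnt_dev S i (T i) e) !natrD.
    exact: perB.
  have : 0 <= \sum_(i < n) \sum_e ((e \in T i)%:R * gg eps (alpha e) (beta e) (k e + 1)
                       - (e \in S i)%:R * gg eps (alpha e) (beta e) (k e)).
    by apply: sumr_ge0 => i _; exact: Xi.
  rewrite exchange_big /=.
  congr (_ <= _); apply: eq_bigr => e _.
  rewrite sumrB -!mulr_suml !sum_mem.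
  done.
have mu0 : 0 <= muC s eps.
  by rewrite /muC; apply: divr_ge0; [lra|apply: mulr_ge0; lra].
have nu0 : 0 <= nuC s eps.
  have -> : nuC s eps = (eps * (2 + s) + s) / ((1 + eps) * (eps + s)).
    rewrite /nuC /rhoC /muC; field.
    apply/andP; split; [apply/negP => /eqP h; lra|apply/negP => /eqP h; lra].
  apply: divr_ge0; [apply: addr_ge0 => //; apply: mulr_ge0; lra|apply: mulr_ge0; lra].
rewrite !social_eq.
apply: le_trans (_ : _ <= \sum_e (k e * (alpha e * k e + beta e)
   + muC s eps * (o e * gg eps (alpha e) (beta e) (k e + 1) - k e * gg eps (alpha e) (beta e) (k e))
   + nuC s eps * (psi eps (alpha e) (beta e) (o e) - psi eps (alpha e) (beta e) (k e)))) _.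
  rewrite big_split /= big_split /= -!mulr_sumr.
  rewrite /Psi -subr_ge0 -sumrB in hP.
  have h1 := mulr_ge0 mu0 hN.
  have h2 := mulr_ge0 nu0 hP.
  rewrite /k /o in h1 h2 *. lra.
rewrite mulr_sumr; apply: ler_sum => e _.
rewrite -[(1 + s) / (eps + s)]/(rhoC s eps).
exact: perC.
Qed.
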